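(* Let $\Sigma$ be a set of labels, $h\in\mathbb{N}_0$, and let $\mathcal{G}$ be a set of finite simple undirected graphs each equipped with a vertex labelling $\mathrm{lab}:V(G)\to\Sigma$. Let $\mathcal{V}$ be the disjoint union of the vertex sets of the graphs in $\mathcal{G}$, let $\mathrm{lab}_0,\dots,\mathrm{lab}_h$ be the Weisfeiler-Lehman colourings, and define the base kernel $k(u,v)=\sum_{i=0}^h[\mathrm{lab}_i(u)=\mathrm{lab}_i(v)]$ on $\mathcal{V}$ (where $[\cdot]$ is $1$ if the condition holds and $0$ otherwise). Then: (i) for all $u,v\in\mathcal{V}$ and $i<h$, $\mathrm{lab}_i(u)\ne\mathrm{lab}_i(v)$ implies $\mathrm{lab}_{i+1}(u)\ne\mathrm{lab}_{i+1}(v)$; (ii) $k$ is a strong kernel on $\mathcal{V}$; (iii) the Weisfeiler-Lehman optimal assignment kernel $K(G,H)=\mathrm{OA}_k(V(G),V(H))$ satisfies $$K(G,H)=\sum_{i=0}^h\sum_{c}\min\{|\{v\in V(G):\mathrm{lab}_i(v)=c\}|,\,|\{v\in V(H):\mathrm{lab}_i(v)=c\}|\},$$ the inner sum ranging over all colours $c$; and (iv) $K$ is a valid kernel on $\mathcal{G}$.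
   Context: Weisfeiler-Lehman colourings: $\mathrm{lab}_0=\mathrm{lab}$, and for $i\ge1$, for every vertex $v$ of a graph $G\in\mathcal{G}$ form the sequence consisting of $\mathrm{lab}_{i-1}(v)$ followed by the lexicographically sorted multiset $\{\mathrm{lab}_{i-1}(u): uv\in E(G)\}$ of colours of its neighbours; then $\mathrm{lab}_i(v)$ is the image of this sequence under a fixed injective map from sequences to new colours, the same map being used for all graphs in $\mathcal{G}$. A strong kernel on a set $\mathcal{X}$ is a symmetric function $k:\mathcal{X}\times\mathcal{X}\to\mathbb{R}_{\ge 0}$ such that $k(x,y)\ge\min\{k(x,z),k(z,y)\}$ for all $x,y,z\in\mathcal{X}$. A valid kernel on a set $\mathcal{S}$ is a symmetric function $K:\mathcal{S}\times\mathcal{S}\to\mathbb{R}$ such that for every finite collection $s_1,\dots,s_m\in\mathcal{S}$ the matrix $(K(s_i,s_j))_{i,j}$ is positive semidefinite. For finite sets $A,B$ and a nonnegative function $k$ on pairs of their elements, $\mathrm{OA}_k(A,B)=\max_{\sigma}\sum_{a\in A}k(a,\sigma(a))$ over all injections $\sigma:A\to B$ if $|A|\le|B|$, and $\mathrm{OA}_k(A,B)=\mathrm{OA}_k(B,A)$ if $|A|>|B|$ (equivalently: pad the smaller set with new elements $z$ having $k(z,\cdot)=0$ and maximize over bijections). *)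

(* Defs.v *)
From HB Require Import structures.
From mathcomp Require Import all_boot all_order all_algebra.
Set Implicit Arguments. Unset Strict Implicit. Unset Printing Implicit Defensive.
Import Order.TTheory GRing.Theory Num.Theory.

(* Weisfeiler-Lehman colourings of one labelled graph (V, e, lab), colours in a
   totally ordered type C; f : seq C -> C is the fixed injective map from
   sequences to colours.  wl f e lab i = lab_i. *)
Fixpoint wl d (C : orderType d) (f : seq C -> C) (V : finType) (e : rel V)
    (lab : V -> C) (n : nat) : V -> C :=
  match n with
  | 0 => lab
  | n'.+1 => fun v =>
      f (wl f e lab n' v ::
         sort (@Order.le d C) [seq wl f e lab n' u | u <- enum V & e v u])
  end.

Definition OA (A B : finType) (k : A -> B -> nat) : nat :=
  if #|A| <= #|B| then
    \max_(s : {ffun A -> B} | injectiveb s) \sum_(a : A) k a (s a)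
  else
    \max_(s : {ffun B -> A} | injectiveb s) \sum_(b : B) k (s b) b.

(* Strong kernel (values in nat, which are nonnegative reals). *)
Definition strong_kernel (X : Type) (k : X -> X -> nat) : Prop :=
  (forall x y, k x y = k y x) /\
  (forall x y z, minn (k x z) (k z y) <= k x y).

Definition valid_kernel (R : realFieldType) (S : Type) (K : S -> S -> R) : Prop :=
  (forall x y, K x y = K y x) /\
  (forall (m : nat) (s : 'I_m -> S) (x : 'I_m -> R),
      (0 <= \sum_(i < m) \sum_(j < m) x i * x j * K (s i) (s j))%R).

(* Main.v *)
Require Import Defs.
From HB Require Import structures.
From mathcomp Require Import all_boot all_order all_algebra.
From mathcomp Require Import zify.
Set Implicit Arguments. Unset Strict Implicit. Unset Printing Implicit Defensive.
Import Order.TTheory GRing.Theory Num.Theory.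

Section K1.
Variables (C : eqType) (h : nat) (X Y : Type) (la : nat -> X -> C) (lb : nat -> Y -> C).
Hypothesis cl : forall t x y, la t.+1 x == lb t.+1 y -> la t x == lb t y.

Definition kk x y := \sum_(t < h.+1) (la t x == lb t y).

Lemma cl_down s t x y : s <= t -> la t x == lb t y -> la s x == lb s y.
Proof.
elim: t => [|t IH]; first by rewrite leqn0 => /eqP ->.
rewrite leq_eqVlt => /orP [/eqP -> //| st] /cl. exact: IH.
Qed.

Lemma kk_ge t x y : t <= h -> la t x == lb t y -> t.+1 <= kk x y.
Proof.
move=> th ag; rewrite /kk -(big_mkord xpredT (fun s => (la s x == lb s y) : nat)).
rewrite (@big_cat_nat _ _ _ t.+1) //=.
rewrite (@eq_big_nat _ _ _ 0 t.+1 _ (fun=> 1)); last first.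
  by move=> s /andP[_ st]; rewrite (cl_down _ ag).
by rewrite sum_nat_const_nat muln1 subn0 leq_addr.
Qed.

Lemma kk_le t x y : t <= h -> la t x != lb t y -> kk x y <= t.
Proof.
move=> th ag; rewrite /kk -(big_mkord xpredT (fun s => (la s x == lb s y) : nat)).
rewrite (@big_cat_nat _ _ _ t) //=; last by apply: leqW.
rewrite [X in _ + X](@eq_big_nat _ _ _ t h.+1 _ (fun=> 0)); last first.
  move=> s /andP[ts _]; case E: (la s x == lb s y) => //.
  by rewrite (cl_down ts E) in ag.
rewrite sum_nat_const_nat muln0 addn0.
apply: leq_trans (_ : \sum_(0 <= s < t) 1 <= t).
  by apply: leq_sum => s _; case: (_ == _).
by rewrite sum_nat_const_nat muln1 subn0.
Qed.

Lemma kk_leh x y : kk x y <= h.+1.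
Proof.
apply: leq_trans (_ : \sum_(t < h.+1) 1 <= h.+1).
  by apply: leq_sum => s _; case: (_ == _).
by rewrite sum1_card card_ord.
Qed.

End K1.

Lemma kk_strong (C : eqType) h (X : Type) (la : nat -> X -> C)
  (cl : forall t x y, la t.+1 x == la t.+1 y -> la t x == la t y) :
  (forall x y, kk h la la x y = kk h la la y x) /\
  (forall x y z, minn (kk h la la x z) (kk h la la z y) <= kk h la la x y).
Proof.
split.
  by move=> x y; apply: eq_bigr => t _; rewrite eq_sym.
move=> x y z.
case E: (minn (kk h la la x z) (kk h la la z y)) => [//|t].
have ag : forall u v, t < kk h la la u v -> t <= h -> la t u == la t v.
  move=> u v lt th; case A: (la t u == la t v) => //.
  by have := kk_le cl th (negbT A); rewrite leqNgt lt.
have lt : t < minn (kk h la la x z) (kk h la la z y) by rewrite E.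
have th : t <= h.
  by have := leq_trans lt (leq_trans (geq_minl _ _) (kk_leh h la la x z)).
move: lt.
rewrite leq_min => /andP[h1 h2].
apply: kk_ge => //.
by rewrite (eqP (ag _ _ h1 th)) (ag _ _ h2 th).
Qed.

Lemma count0 (T : eqType) (P : pred T) (s : seq T) :
  (forall y, y \in s -> ~~ P y) -> count P s = 0.
Proof.
elim: s => //= a s IH H; rewrite (negbTE (H a (mem_head _ _))) IH //.
by move=> y yi; apply: H; rewrite in_cons yi orbT.
Qed.

Section K2.
Variables (C : eqType) (h : nat) (X Y : eqType) (la : nat -> X -> C) (lb : nat -> Y -> C).

Definition inner t sx sy L := \sum_(c <- L)
  minn (count (fun x => la t x == c) sx) (count (fun y => lb t y == c) sy).
Definition cols t sx sy := undup (map (la t) sx ++ map (lb t) sy).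
Definition FF sx sy := \sum_(t < h.+1) inner t sx sy (cols t sx sy).

Lemma count0m (T : eqType) (f : T -> C) (s : seq T) c :
  c \notin map f s -> count (fun x => f x == c) s = 0.
Proof.
move=> nc; apply: count0 => y ys.
apply: contra nc => /eqP <-; exact: map_f.
Qed.

Lemma inner_L t sx sy L : uniq L -> {subset map (la t) sx ++ map (lb t) sy <= L} ->
  inner t sx sy L = inner t sx sy (cols t sx sy).
Proof.
move=> uL sub; rewrite /inner (bigID (fun c => c \in map (la t) sx ++ map (lb t) sy)) /=.
rewrite [X in _ + X]big1 ?addn0; last first.
  by move=> c; rewrite mem_cat negb_or => /andP[nx _]; rewrite count0m ?min0n.
rewrite -big_filter; apply: perm_big; apply: uniq_perm.
- by rewrite filter_uniq.
- exact: undup_uniq.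
- move=> c; rewrite mem_filter mem_undup; apply/andP/idP => [[]//|cin]; split => //.
  exact: sub.
Qed.

Lemma sum_ind (L : seq C) (z : C) (E : bool) : uniq L -> z \in L ->
  \sum_(c <- L) ((E && (c == z)) : nat) = E.
Proof.
move=> uL zL; case: E.
  have E : count_mem z L = true by rewrite count_uniq_mem // zL.
  rewrite -E.
  rewrite -sum1_count [RHS]big_mkcond /=; apply: eq_bigr => c _; by case: (c == z).
by rewrite big1.
Qed.

Lemma min_step_ge a b sx sy t c :
  minn (count (fun x => la t x == c) sx) (count (fun y => lb t y == c) sy)
   + ((la t a == lb t b) && (c == la t a)) <=
  minn (count (fun x => la t x == c) (a::sx)) (count (fun y => lb t y == c) (b::sy)).
Proof.
rewrite /=; have [E|E] := eqVneq (la t a) (lb t b).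
  rewrite -E /=; have [->|ne] := eqVneq c (la t a); rewrite ?eqxx /=; first by lia.
  by lia.
by rewrite /= addn0; lia.
Qed.

Lemma min_step_eq a b sx sy t c :
  (la t a != lb t b -> count (fun y => lb t y == la t a) sy = 0 /\
                       count (fun x => la t x == lb t b) sx = 0) ->
  minn (count (fun x => la t x == c) (a::sx)) (count (fun y => lb t y == c) (b::sy)) =
  minn (count (fun x => la t x == c) sx) (count (fun y => lb t y == c) sy)
   + ((la t a == lb t b) && (c == la t a)).
Proof.
move=> H /=; have [E|E] := eqVneq (la t a) (lb t b).
  rewrite -E /=; have [->|ne] := eqVneq c (la t a); rewrite ?eqxx /=; first by lia.
  by rewrite addn0.
have [H1 H2] := H E; rewrite /= addn0.
have [->|nea] := eqVneq c (la t a).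
  by rewrite H1 eq_sym (negbTE E) /=; lia.
have [->|neb] := eqVneq c (lb t b).
  by rewrite H2 /=; lia.
by rewrite /=.
Qed.

Lemma sub_cols t a b sx sy :
  {subset map (la t) sx ++ map (lb t) sy <= cols t (a::sx) (b::sy)}.
Proof.
move=> c; rewrite mem_undup !mem_cat /= !in_cons => /orP[->|->]; by rewrite ?orbT.
Qed.

Lemma in_cols t a b sx sy : la t a \in cols t (a::sx) (b::sy).
Proof. by rewrite mem_undup mem_cat /= in_cons eqxx. Qed.

Lemma FF_cons_ge a b sx sy : kk h la lb a b + FF sx sy <= FF (a::sx) (b::sy).
Proof.
rewrite /FF /kk -big_split /=; apply: leq_sum => t _.
rewrite -(inner_L (undup_uniq _) (@sub_cols t a b sx sy)).
rewrite -(@sum_ind _ _ (la t a == lb t b) (undup_uniq _) (@in_cols t a b sx sy)).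
rewrite /inner addnC -big_split /=; apply: leq_sum => c _; exact: min_step_ge.
Qed.

Lemma FF_cons_eq a b sx sy :
  (forall t, t <= h -> la t a != lb t b ->
     (forall y, y \in sy -> lb t y != la t a) /\ (forall x, x \in sx -> la t x != lb t b)) ->
  FF (a::sx) (b::sy) = kk h la lb a b + FF sx sy.
Proof.
move=> H; rewrite /FF /kk -big_split /=; apply: eq_bigr => t _.
rewrite -(inner_L (undup_uniq _) (@sub_cols t a b sx sy)).
rewrite -(@sum_ind _ _ (la t a == lb t b) (undup_uniq _) (@in_cols t a b sx sy)).
rewrite /inner addnC -big_split /=; apply: eq_bigr => c _; apply: min_step_eq.
move=> E; have [H1 H2] := H t (ltn_ord t) E; split; apply: count0.
  by move=> y /H1.
by move=> x /H2.
Qed.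

Lemma FF_perm sx sx' sy sy' : perm_eq sx sx' -> perm_eq sy sy' -> FF sx sy = FF sx' sy'.
Proof.
move=> px py; apply: eq_bigr => t _.
have sub : {subset map (la t) sx ++ map (lb t) sy <= cols t sx' sy'}.
  by move=> c; rewrite mem_undup !mem_cat (perm_mem (perm_map _ px)) (perm_mem (perm_map _ py)).
rewrite -(inner_L (undup_uniq _) sub); apply: eq_bigr => c _.
by rewrite (permP px) (permP py).
Qed.

Lemma FF_mono sx sy sy' : (forall P : pred Y, count P sy <= count P sy') ->
  FF sx sy <= FF sx sy'.
Proof.
move=> H; apply: leq_sum => t _.
have sub : {subset map (la t) sx ++ map (lb t) sy <= cols t sx sy'}.
  move=> c; rewrite mem_undup !mem_cat => /orP[->//|/mapP[y ys ->]].
  apply/orP; right; apply/mapP.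
  have : 0 < count (fun z => lb t z == lb t y) sy'.
    apply: leq_trans (H _); rewrite -has_count; apply/hasP; by exists y.
  by rewrite -has_count => /hasP[z zs /eqP e]; exists z.
rewrite -(inner_L (undup_uniq _) sub); apply: leq_sum => c _.
have := H (fun y => lb t y == c); lia.
Qed.

Lemma FF_nil sy : FF [::] sy = 0.
Proof.
rewrite /FF big1 // => t _; rewrite /inner big1 // => c _; exact: min0n.
Qed.

Lemma FF_upper sx sy : size sx = size sy ->
  \sum_(p <- zip sx sy) kk h la lb p.1 p.2 <= FF sx sy.
Proof.
elim: sx sy => [|a sx IH] [|b sy] //=; first by rewrite big_nil.
move=> [e]; rewrite big_cons /=.
exact: leq_trans (leq_add (leqnn _) (IH _ e)) (FF_cons_ge _ _ _ _).
Qed.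

End K2.

Lemma seq_argmax (T : eqType) (g : T -> nat) (s : seq T) (z : T) :
  z \in s -> exists2 m, m \in s & forall x, x \in s -> g x <= g m.
Proof.
elim: s z => // a s IH z _.
case: s IH => [|b s] IH.
  by exists a => [|x]; rewrite ?mem_head // inE => /eqP ->.
have [m ms mx] := IH b (mem_head _ _).
case: (leqP (g a) (g m)) => lam.
  exists m; first by rewrite in_cons ms orbT.
  by move=> x; rewrite in_cons => /orP[/eqP ->//|]; apply: mx.
exists a; first exact: mem_head.
move=> x; rewrite in_cons => /orP[/eqP ->//|/mx xm]; exact: leq_trans xm (ltnW lam).
Qed.

Lemma FF_lower (C : eqType) (h : nat) (X Y : eqType) (la : nat -> X -> C) (lb : nat -> Y -> C)
  (cl : forall t x y, la t.+1 x == lb t.+1 y -> la t x == lb t y) n sx sy :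
  size sx = n -> n <= size sy ->
  exists sx', exists sy', exists sz, [/\ perm_eq sx sx', perm_eq sy (sy' ++ sz),
     size sy' = size sx' & FF h la lb sx sy <= \sum_(p <- zip sx' sy') kk h la lb p.1 p.2].
Proof.
elim: n sx sy => [|n IH] sx sy.
  move/size0nil => -> _; exists [::], [::], sy; split; rewrite ?perm_refl ?FF_nil //.
move=> sxn lesy.
have [x0 x0s] : exists x0, x0 \in sx.
  by case: sx sxn => // x sx' _; exists x; exact: mem_head.
have [y0 y0s] : exists y0, y0 \in sy.
  by case: sy lesy => // y sy' _; exists y; exact: mem_head.
have z0 : (x0, y0) \in [seq (x, y) | x <- sx, y <- sy].
  by apply/allpairsP; exists (x0, y0).
have [[a b] /allpairsP [[a' b'] /= [aS bS [-> ->]]] mx] :=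
  seq_argmax (fun p => kk h la lb p.1 p.2) z0.
have mx' : forall x y, x \in sx -> y \in sy -> kk h la lb x y <= kk h la lb a' b'.
  move=> x y xs ys; apply: (mx (x, y)); by apply/allpairsP; exists (x, y).
have s1x : size (rem a' sx) = n by rewrite size_rem // sxn.
have s1y : n <= size (rem b' sy) by rewrite size_rem //; move: lesy; case: (size sy).
have [sx1' [sy1' [sz [p1 p2 s1 le1]]]] := IH (rem a' sx) (rem b' sy) s1x s1y.
exists (a' :: sx1'), (b' :: sy1'), sz; split.
- by apply: perm_trans (perm_to_rem aS) _; rewrite perm_cons.
- by apply: perm_trans (perm_to_rem bS) _; rewrite /= perm_cons.
- by rewrite /= s1.
rewrite (FF_perm h la lb (perm_to_rem aS) (perm_to_rem bS)) FF_cons_eq.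
  by rewrite big_cons /= leq_add2l.
move=> t th ne; split => [y /mem_rem ys | x /mem_rem xs]; apply/negP => /eqP e.
  have e' : la t a' == lb t y by rewrite e.
  have := kk_ge cl th e'.
  have := kk_le cl th ne; have := mx' a' y aS ys; lia.
have e' : la t x == lb t b' by rewrite e.
have := kk_ge cl th e'.
have := kk_le cl th ne; have := mx' x b' xs bS; lia.
Qed.

Lemma card_count (T : finType) (P : pred T) : #|[pred v : T | P v]| = count P (enum T).
Proof. by rewrite cardE -size_filter enumT -deprecated_filter_index_enum /index_enum unlock. Qed.

Lemma sum_enum (T : finType) (F : T -> nat) : \sum_(a : T) F a = \sum_(a <- enum T) F a.
Proof. by rewrite enumT. Qed.

Lemma zip_index (A : eqType) (B : Type) (F : A -> B -> nat) sx sy b0 :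
  uniq sx -> size sx = size sy ->
  \sum_(a <- sx) F a (nth b0 sy (index a sx)) = \sum_(p <- zip sx sy) F p.1 p.2.
Proof.
elim: sx sy => [|a sx IH] [|b sy] //=; first by rewrite !big_nil.
move=> /andP[nas us] [e].
rewrite !big_cons /= eqxx; congr (_ + _).
rewrite -(IH sy us e); apply: eq_big_seq => x xs /=.
have -> : (a == x) = false by apply/eqP => ax; rewrite ax xs in nas.
by [].
Qed.

Lemma OA_core (C : eqType) h (A B : finType) (la : nat -> A -> C) (lb : nat -> B -> C)
  (cl : forall t x y, la t.+1 x == lb t.+1 y -> la t x == lb t y) :
  #|A| <= #|B| ->
  \max_(s : {ffun A -> B} | injectiveb s) \sum_(a : A) kk h la lb a (s a)
    = FF h la lb (enum A) (enum B).
Proof.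
move=> AB; apply/eqP; rewrite eqn_leq; apply/andP; split.
  apply/bigmax_leqP => s /injectiveP inj.
  have -> : \sum_(a : A) kk h la lb a (s a)
           = \sum_(p <- zip (enum A) (map s (enum A))) kk h la lb p.1 p.2.
    by rewrite sum_enum; elim: (enum A) => [|x r IH]; rewrite ?big_nil //= !big_cons IH.
  apply: leq_trans (FF_upper _ _ _ (esym (size_map _ _))) _.
  apply: FF_mono => P; rewrite -!size_filter; apply: uniq_leq_size.
    by rewrite filter_uniq // (map_inj_uniq inj) // enum_uniq.
  by move=> y; rewrite !mem_filter => /andP[-> _]; rewrite /= -enumT mem_enum.
have szAB : size (enum A) <= size (enum B) by rewrite -!cardT.
have [sx' [sy' [sz [p1 p2 s1 le1]]]] := @FF_lower _ h _ _ la lb cl _ (enum A) (enum B) (erefl _) szAB.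
apply: leq_trans le1 _.
case: sy' p2 s1 => [|b0 sy''] p2 s1.
  by rewrite (_ : zip sx' [::] = [::] :> seq (A * B)) ?big_nil //; case: (sx').
set sy' := b0 :: sy'' in p2 s1 *.
have usy : uniq sy'.
  by have := enum_uniq B; rewrite (perm_uniq p2) cat_uniq => /andP[].
have usx : uniq sx' by rewrite -(perm_uniq p1) enum_uniq.
have memx : forall a, a \in sx' by move=> a; rewrite -(perm_mem p1) mem_enum.
pose s := [ffun a => nth b0 sy' (index a sx')].
have inj : injectiveb s.
  apply/injectiveP => a1 a2; rewrite !ffunE => /eqP.
  rewrite nth_uniq ?s1 ?index_mem ?memx // => /eqP e.
  by rewrite -(nth_index a1 (memx a1)) e nth_index.
apply: leq_trans (leq_bigmax_cond _ inj).
rewrite sum_enum (perm_big sx' p1) /=.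
rewrite -(zip_index _ b0 usx (esym s1)).
by apply: eq_leq; apply: eq_bigr => a _; rewrite ffunE.
Qed.

Lemma FF_swap (C : eqType) h (X Y : eqType) (la : nat -> X -> C) (lb : nat -> Y -> C) sx sy :
  FF h la lb sx sy = FF h lb la sy sx.
Proof.
apply: eq_bigr => t _.
have sub : {subset map (lb t) sy ++ map (la t) sx <= cols la lb t sx sy}.
  by move=> c; rewrite mem_undup !mem_cat orbC.
rewrite -(inner_L (undup_uniq _) sub); apply: eq_bigr => c _; exact: minnC.
Qed.

Lemma sum_lt N a : \sum_(r < N) (r < a) = minn a N.
Proof.
elim: N => [|N IH]; first by rewrite big_ord0 minn0.
rewrite big_ord_recr /= IH; case: ltnP => /= H; lia.
Qed.

Lemma minn_sum a b N : a <= N -> b <= N -> minn a b = \sum_(r < N) ((r < a) && (r < b)).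
Proof.
move=> aN bN; transitivity (\sum_(r < N) (r < minn a b)); first by rewrite sum_lt; lia.
by apply: eq_bigr => r _; rewrite leq_min.
Qed.

Section PSD.
Local Open Scope ring_scope.
Definition psd (R : realFieldType) m (M : 'I_m -> 'I_m -> R) :=
  forall x : 'I_m -> R, (0 <= \sum_(i < m) \sum_(j < m) x i * x j * M i j)%R.

Lemma psd_sum (R : realFieldType) m (T : Type) (L : seq T) (M : T -> 'I_m -> 'I_m -> R) :
  (forall k, psd (M k)) -> psd (fun i j => \sum_(k <- L) M k i j).
Proof.
move=> H x.
have -> : (\sum_(i < m) \sum_(j < m) x i * x j * (\sum_(k <- L) M k i j)
          = \sum_(k <- L) \sum_(i < m) \sum_(j < m) x i * x j * M k i j)%R.
  symmetry; rewrite exchange_big /=; apply: eq_bigr => i _.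
  rewrite exchange_big /=; apply: eq_bigr => j _; by rewrite mulr_sumr.
by apply: sumr_ge0 => k _; apply: H.
Qed.

Lemma psd_rank1 (R : realFieldType) m (phi : 'I_m -> R) : psd (fun i j => phi i * phi j)%R.
Proof.
move=> x.
have -> : (\sum_(i < m) \sum_(j < m) x i * x j * (phi i * phi j)
          = (\sum_(i < m) x i * phi i) ^+ 2)%R.
  rewrite expr2 mulr_suml; apply: eq_bigr => i _; rewrite mulr_sumr.
  by apply: eq_bigr => j _; rewrite mulrACA.
exact: sqr_ge0.
Qed.

End PSD.

Unset Implicit Arguments. Set Strict Implicit. Set Printing Implicit Defensive.

Theorem mainTheorem11 (d : Order.disp_t) (C : orderType d) (f : seq C -> C) (hf : injective f)
    (I : Type) (V : I -> finType) (e : forall i, rel (V i))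
    (lab : forall i, V i -> C)
    (e_sym : forall i, symmetric (e i)) (e_irr : forall i, irreflexive (e i))
    (h : nat) (R : realFieldType) :
  let labi := fun (i : I) (t : nat) => wl f (e i) (lab i) t in
  let k := fun (x y : {i : I & V i}) =>
    \sum_(t < h.+1) (labi (projT1 x) t (projT2 x) == labi (projT1 y) t (projT2 y)) in
  let K := fun (G H : I) =>
    OA (fun (u : V G) (v : V H) => k (existT _ G u) (existT _ H v)) in
  [/\ (forall (x y : {i : I & V i}) (t : nat), t < h ->
         labi (projT1 x) t (projT2 x) != labi (projT1 y) t (projT2 y) ->
         labi (projT1 x) t.+1 (projT2 x) != labi (projT1 y) t.+1 (projT2 y)),
      strong_kernel k,
      (forall G H : I,
         K G H = \sum_(t < h.+1)
                   \sum_(c <- undup ([seq labi G t v | v : V G] ++ [seq labi H t v | v : V H]))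
                     minn #|[pred v : V G | labi G t v == c]|
                          #|[pred v : V H | labi H t v == c]|)
    & valid_kernel (fun G H : I => ((K G H)%:R)%R : R)].
Proof.
move=> labi k K.
have clG : forall G H t (u : V G) (v : V H),
    labi G t.+1 u == labi H t.+1 v -> labi G t u == labi H t v.
  by move=> G H t u v /eqP /hf [E _]; apply/eqP; exact: E.
have KF : forall G H, K G H = FF h (labi G) (labi H) (enum (V G)) (enum (V H)).
  move=> G H; rewrite /K /OA; case: leqP => AB.
    rewrite -(OA_core h (clG G H) AB); apply: eq_bigr => s _; exact: eq_bigr.
  rewrite FF_swap -(OA_core h (clG H G) (ltnW AB)).
  apply: eq_bigr => s _; apply: eq_bigr => b _; apply: eq_bigr => t _; by rewrite eq_sym.
split.
- move=> x y t _; apply: contra; exact: clG.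
- have S := (@kk_strong _ h _ (fun t (x : {i : I & V i}) => labi (projT1 x) t (projT2 x))
            (fun t x y => clG _ _ t (projT2 x) (projT2 y))).
  exact S.
- move=> G H; rewrite KF /FF; apply: eq_bigr => t _; rewrite /inner /cols.
  by apply: eq_bigr => c _; rewrite !card_count.
split.
  by move=> G H; rewrite !KF FF_swap.
move=> m s x.
pose L t := undup (flatten [seq [seq labi (s i) t v | v <- enum (V (s i))] | i <- enum 'I_m]).
pose N := \max_(i < m) #|V (s i)|.
pose phi t c r i := ((((r < count (fun v => labi (s i) t v == c) (enum (V (s i))))%N : nat)%:R : R)%R).
have cN : forall i t c, count (fun v => labi (s i) t v == c) (enum (V (s i))) <= N.
  move=> i t c; apply: leq_trans (count_size _ _) _; rewrite -cardT.
  exact: (leq_bigmax (F := fun i => #|V (s i)|) i).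
have E : forall i j, (((K (s i) (s j))%:R : R) =
   \sum_(t < h.+1) \sum_(c <- L t) \sum_(r < N) phi t c r i * phi t c r j)%R.
  move=> i j; rewrite KF /FF natr_sum; apply: eq_bigr => t _.
  have sub : {subset map (labi (s i) t) (enum (V (s i))) ++ map (labi (s j) t) (enum (V (s j)))
              <= L t}.
    move=> c; rewrite mem_undup mem_cat => /orP[ci|cj]; apply/flatten_mapP.
      by exists i; rewrite ?mem_enum.
    by exists j; rewrite ?mem_enum.
  rewrite -(inner_L (undup_uniq _) sub) /inner natr_sum; apply: eq_bigr => c _.
  rewrite (minn_sum (cN i t c) (cN j t c)) natr_sum; apply: eq_bigr => r _.
  by rewrite -mulnb natrM.
have -> : (\sum_(i < m) \sum_(j < m) x i * x j * (K (s i) (s j))%:R =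
          \sum_(i < m) \sum_(j < m) x i * x j *
             (\sum_(t < h.+1) \sum_(c <- L t) \sum_(r < N) phi t c r i * phi t c r j))%R.
  by apply: eq_bigr => i _; apply: eq_bigr => j _; rewrite E.

move: x; apply: psd_sum => t; apply: psd_sum => c; apply: psd_sum => r.
exact: psd_rank1.
Qed.
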